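(* For the family of plane curves $y^3+3r(x)y^2-3p(x)y+2q(x)=0$ parametrised by triples $(p,q,r)$ of univariate polynomials, the cuspidal component of the discriminant is the zero set of the resultant of $p(x)+r(x)^2$ and $2q(x)-r(x)^3$ with respect to $x$. Moreover, if $$p(x)=\sum_{i=0}^d\lambda_ix^i,\quad q(x)=x^n+\sum_{i=0}^{n-1}\xi_ix^i,\quad r(x)=\sum_{i=0}^{\lfloor n/3\rfloor}\zeta_ix^i,$$ then the equation of the cuspidal component, considered as a polynomial in the variable $\lambda_0$, is of degree $n$ with coprime coefficients.
   Context: The cuspidal component of the discriminant is the set of parameters $(p,q,r)$ for which the projection $(x,y)\mapsto x$ restricted to the curve has a degenerate critical point, i.e. there is a common zero of $f$, $\partial_yf$, $\partial_y^2f$ where $f=y^3+3r(x)y^2-3p(x)y+2q(x)$. The coefficients of the polynomial in $\lambda_0$ are polynomials in the remaining parameters $\lambda_i\ (i\ge1),\xi_i,\zeta_i$. *)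

(* Defs.v *)
From HB Require Import structures.
From mathcomp Require Import all_boot all_order all_algebra.
From mathcomp Require Import mpoly.
Set Implicit Arguments. Unset Strict Implicit. Unset Printing Implicit Defensive.
Import Order.TTheory GRing.Theory.
Local Open Scope ring_scope.

Definition fiber (C : comNzRingType) (p q r : {poly C}) (x : C) : {poly C} :=
  'X^3 + (3%:R * r.[x]) *: 'X^2 - (3%:R * p.[x]) *: 'X + (2%:R * q.[x])%:P.

Definition cuspidal (C : comNzRingType) (p q r : {poly C}) : Prop :=
  exists x y : C, [/\ root (fiber p q r x) y,
                      root (fiber p q r x)^`() y &
                      root (fiber p q r x)^`(2) y].

(* Remaining parameters: lambda_1..lambda_d, xi_0..xi_{n-1}, zeta_0..zeta_{n/3};
   they are the variables of the multivariate ring {mpoly C[nparams d n]}.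
   lambda_0 is the variable of the outer univariate ring {poly {mpoly ...}}. *)
Definition nparams (d n : nat) : nat := d + (n + (n %/ 3).+1).

Definition lam_idx d n (i : 'I_d) : 'I_(nparams d n) := lshift _ i.
Definition xi_idx d n (i : 'I_n) : 'I_(nparams d n) :=
  rshift d (lshift (n %/ 3).+1 i).
Definition zeta_idx d n (i : 'I_(n %/ 3).+1) : 'I_(nparams d n) :=
  rshift d (rshift n i).
Arguments lam_idx : clear implicits.
Arguments xi_idx : clear implicits.
Arguments zeta_idx : clear implicits.

Section Family.
Variables (C : comNzRingType) (d n : nat).
Local Notation S := {mpoly C[nparams d n]}.
Local Notation T := {poly S}.

Definition parT (k : 'I_(nparams d n)) : T := ('X_k : S)%:P.

Definition famP : {poly T} :=
  ('X : T)%:P + \sum_(i < d) (parT (lam_idx d n i))%:P * 'X^(i.+1).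
Definition famQ : {poly T} :=
  'X^n + \sum_(i < n) (parT (xi_idx d n i))%:P * 'X^i.
Definition famR : {poly T} :=
  \sum_(i < (n %/ 3).+1) (parT (zeta_idx d n i))%:P * 'X^i.

Definition cusp_eq : T :=
  resultant (famP + famR ^+ 2) (2%:R *: famQ - famR ^+ 3).
End Family.

Definition coprime_family (C : fieldType) (N : nat) (c : nat -> {mpoly C[N]}) :
  Prop :=
  forall g : {mpoly C[N]}, (forall i, exists h, c i = g * h) ->
    exists2 a : C, a != 0 & g = a%:MP.

(* Main.v *)
Require Import Defs.
From HB Require Import structures.
From mathcomp Require Import all_boot all_order all_algebra.
From mathcomp Require Import mpoly.
From mathcomp Require Import fingroup perm.
From mathcomp Require Import ring zify.
Import GRing.Theory.
Local Open Scope ring_scope.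

Module Aux.
Set Implicit Arguments. Unset Strict Implicit. Unset Printing Implicit Defensive.

Section P1.
Variable (C : fieldType) (charC0 : [pchar C] =i pred0).
Implicit Types (p q r : {poly C}) (x y : C).

Lemma natC_neq0 k : (k.+1%:R : C) != 0.
Proof. by move/pcharf0P: charC0 => ->. Qed.

Lemma fiber_h0 p q r x y :
  (fiber p q r x).[y] = y^+3 + 3%:R * r.[x] * y^+2 - 3%:R * p.[x] * y + 2%:R * q.[x].
Proof. by rewrite /fiber !hornerE. Qed.

Lemma fiber_h1 p q r x y :
  (fiber p q r x)^`().[y] = 3%:R * y^+2 + 2%:R * 3%:R * r.[x] * y - 3%:R * p.[x].
Proof.
rewrite /fiber !derivE !hornerE /=. ring.
Qed.

Lemma fiber_h2 p q r x y :
  (fiber p q r x)^`(2).[y] = 2%:R * 3%:R * (y + r.[x]).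
Proof.
rewrite /fiber /= !derivE !hornerE /=. ring.
Qed.

Lemma cusp_iff p q r : cuspidal p q r <->
  exists x, root (p + r ^+ 2) x /\ root (2%:R *: q - r ^+ 3) x.
Proof.
have n2 : (2%:R : C) != 0 by exact: natC_neq0.
have n3 : (3%:R : C) != 0 by exact: natC_neq0.
split.
  case=> x [y [/eqP h0 /eqP h1 /eqP h2]]; exists x.
  rewrite fiber_h2 in h2; rewrite fiber_h1 in h1; rewrite fiber_h0 in h0.
  have hy : y = - r.[x].
    by apply/eqP; rewrite -subr_eq0 opprK; move/eqP: h2; rewrite !mulf_eq0 (negbTE n2) (negbTE n3).
  subst y.
  have hp : p.[x] + r.[x] ^+ 2 = 0.
    apply/eqP; move/eqP: h1. 
    have -> : 3%:R * (- r.[x]) ^+ 2 + 2%:R * 3%:R * r.[x] * - r.[x] - 3%:R * p.[x] = - 3%:R * (p.[x] + r.[x] ^+ 2) :> C by ring.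
    by rewrite mulf_eq0 oppr_eq0 (negbTE n3).
  split; rewrite /root !hornerE; first by rewrite hp.
  apply/eqP; have hp' : p.[x] = - r.[x] ^+ 2 by apply/eqP; rewrite -subr_eq0 opprK hp.
  move: h0; rewrite hp'; have -> : (- r.[x]) ^+ 3 + 3%:R * r.[x] * (- r.[x]) ^+ 2 - 3%:R * (- r.[x] ^+ 2) * - r.[x] + 2%:R * q.[x]
     = 2%:R * q.[x] - r.[x] ^+ 3 :> C by ring.
  by [].
case=> x [/eqP h1 /eqP h2]; exists x, (- r.[x]).
rewrite !hornerE in h1 h2.
have hp : p.[x] = - r.[x] ^+ 2 by apply/eqP; rewrite -subr_eq0 opprK h1.
rewrite /root fiber_h0 fiber_h1 fiber_h2 hp; split; apply/eqP.
- rewrite -h2; ring.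
- ring.
- ring.
Qed.
End P1.

Lemma res0_iff (C : closedFieldType) (a b : {poly C}) : (a != 0) || (b != 0) ->
  resultant a b = 0 <-> exists x, root a x /\ root b x.
Proof.
move=> nz; split.
  move/eqP; rewrite resultant_eq0 => hs.
  have /closed_rootP [x hx] : size (gcdp a b) != 1%N by rewrite neq_ltn hs orbT.
  exists x; split; apply: root_dvdp hx; [exact: dvdp_gcdl | exact: dvdp_gcdr].
case=> x [ha hb]; apply/eqP; rewrite resultant_eq0.
have hd : ('X - x%:P) %| gcdp a b by rewrite dvdp_gcd !dvdp_XsubCl ha hb.
have g0 : gcdp a b != 0 by rewrite gcdp_eq0 negb_and.
by have := dvdp_leq g0 hd; rewrite size_XsubC.
Qed.

Lemma part1 (C : closedFieldType) (charC0 : [pchar C] =i pred0) :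
  (forall p q r : {poly C},
     (p + r ^+ 2 != 0) || (2%:R *: q - r ^+ 3 != 0) ->
     (cuspidal p q r <-> resultant (p + r ^+ 2) (2%:R *: q - r ^+ 3) = 0)).
Proof.
move=> p q r nz; rewrite res0_iff //; exact: cusp_iff.
Qed.

Section Top.
Variable R : comNzRingType.
Implicit Types p q : {poly R}.

Lemma coefM_top p q a b : (size p <= a.+1)%N -> (size q <= b.+1)%N ->
  (size (p * q)%R <= (a + b).+1)%N /\ (p * q)`_(a + b) = p`_a * q`_b.
Proof.
move=> hp hq; split.
  apply: leq_trans (size_mul_leq _ _) _.
  lia.
rewrite coefM (bigD1 (Ordinal (leq_addr b a : (a < (a + b).+1)%N))) //= addKn big1 ?addr0 // => j hj.
have [hlt|hge] := ltnP j a.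
  rewrite [q`__](leq_sizeP _ _ hq) ?mulr0 //.
  lia.
rewrite [p`__](leq_sizeP _ _ hp) ?mul0r //.
have : (j : nat) != a by move: hj; apply: contra => /eqP h; apply/eqP/val_inj.
lia.
Qed.

Lemma prod_top (I : Type) (r : seq I) (F : I -> {poly R}) (w : I -> nat) :
  (forall i, size (F i) <= (w i).+1)%N ->
  (size (\prod_(i <- r) F i)%R <= (\sum_(i <- r) w i)%N.+1)%N /\
  (\prod_(i <- r) F i)`_(\sum_(i <- r) w i)%N = \prod_(i <- r) (F i)`_(w i).
Proof.
move=> hF; elim: r => [|a r [IHs IHc]].
  by rewrite !big_nil size_poly1 coefC.
rewrite !big_cons; have [s c] := coefM_top (hF a) IHs.
by split=> //; rewrite c IHc.
Qed.

Lemma det_top N (M : 'M[{poly R}]_N) (w : 'I_N -> nat) :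
  (forall i j, size (M i j) <= (w i).+1)%N ->
  (size (\det M) <= (\sum_i w i)%N.+1)%N /\
  (\det M)`_(\sum_i w i)%N = \det (\matrix_(i, j) (M i j)`_(w i)).
Proof.
move=> hM.
have sg : forall (b : bool) (P : {poly R}), (-1) ^+ b * P = if b then - P else P.
  by case=> P; rewrite ?expr1 ?expr0 ?mulN1r ?mul1r.
rewrite /determinant; split.
  apply: (leq_trans (size_sum _ _ _)); apply/bigmax_leqP => s _.
  rewrite sg; have [h _] := prod_top (index_enum 'I_N) (fun i => hM i ((s : {perm 'I_N}) i)).
  by case: (odd_perm s); rewrite ?size_opp.
rewrite coef_sum; apply: eq_bigr => s _.
have [_ h] := prod_top (index_enum 'I_N) (fun i => hM i ((s : {perm 'I_N}) i)).
rewrite sg; case: (odd_perm s); rewrite ?coefN h ?expr1 ?expr0 ?mulN1r ?mul1r.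
  1: congr (- _).
  all: by apply: eq_bigr => i _; rewrite mxE.
Qed.
End Top.

Section ResTop.
Variable R : comNzRingType.

Lemma res_top (p' q' : {poly R}) :
  let p := (('X : {poly R})%:P + p'^:P) in let q := q'^:P in
  (size (resultant p q) <= (size q').-1.+1)%N /\
  (resultant p q)`_((size q').-1) = lead_coef q' ^+ (size p).-1.
Proof.
move=> p q.
set a := (size q).-1; set b := (size p).-1.
have sq : size q = size q' by rewrite size_map_polyC.
pose w := fun i : 'I_(a + b) => if split i is inl _ then 1%N else 0%N.
have sl : forall i : 'I_a, split (lshift b i) = inl i := fun i => unsplitK (inl _ i).
have sr : forall i : 'I_b, split (rshift a i) = inr i := fun i => unsplitK (inr _ i).
have hw : (\sum_i w i)%N = a.
  rewrite big_split_ord /= (eq_bigr (fun _ => 1%N)); last first.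
    by move=> i _; rewrite /w sl.
  rewrite [X in (_ + X)%N]big1; last by move=> i _; rewrite /w sr.
  by rewrite sum1_card card_ord addn0.
have cp : forall i, p`_i = (if i == 0%N then 'X else 0) + (p'`_i)%:P.
  by move=> i; rewrite coefD coefC coef_map.
have cq : forall i, q`_i = (q'`_i)%:P by move=> i; rewrite coef_map.
have hM : forall i j, (size (Sylvester_mx p q i j) <= (w i).+1)%N.
  move=> i j; rewrite Sylvester_mxE /w; case: (split i) => k.
    case: (k <= j)%N; rewrite ?mulr0n ?size_poly0 // mulr1n cp.
    apply: (leq_trans (size_polyD _ _)); rewrite geq_max size_polyC.
    by case: (_ == _); rewrite ?size_polyX ?size_poly0 //; case: (_ != _).
  case: (k <= j)%N; rewrite ?mulr0n ?size_poly0 // mulr1n cq size_polyC.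
  by case: (_ != _).
have [hs hc] := det_top hM.
rewrite /resultant; split; first by apply: leq_trans hs _; rewrite hw /a sq.
have e : (size q').-1 = (\sum_i w i)%N by rewrite hw /a sq.
rewrite e hc.
pose Y := \matrix_(k < b, l < b) (q'`_(a + l - k) *+ (k <= a + l)%N).
have -> : \matrix_(i, j) (Sylvester_mx p q i j)`_(w i) =
          block_mx 1%:M 0 (\matrix_(k < b, l < a) (q'`_(l - (k : nat)) *+ (k <= l)%N)) Y.
  apply/matrixP => i j; rewrite mxE Sylvester_mxE /w.
  case: split_ordP => k ->; case: (split_ordP j) => l ->.
  - rewrite block_mxEul !mxE coefMn cp coefD coefC /=.
    have [klt|kgt|keq] := ltngtP k l.
    + by rewrite subn_eq0 leqNgt klt /= coef0 addr0 mul0rn -val_eqE /= (ltn_eqF klt).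
    + by rewrite ?leqNgt ?kgt /= mulr0n -val_eqE /= (gtn_eqF kgt).
    + have kl : k = l by apply/val_inj.
      by rewrite kl subnn ?leqnn eqxx /= addr0 coefX eqxx.
  - rewrite block_mxEur mxE coefMn cp coefD coefC /=.
    rewrite (_ : ((size q).-1 + l - k == 0)%N = false) ?coef0 ?addr0 ?mul0rn //.
    apply/negbTE; have := ltn_ord k; rewrite subn_eq0 -ltnNge.
    by move=> h; exact: leq_trans h (leq_addr _ _).
  - by rewrite block_mxEdl mxE coefMn cq coefC.
  - by rewrite block_mxEdr mxE coefMn cq coefC.
rewrite det_lblock det1 mul1r det_trig; last first.
  apply/is_trig_mxP => k l klt; rewrite mxE.
  rewrite [q'`__](leq_sizeP _ _ (leqnn (size q'))) ?mul0rn //.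
  rewrite -sq /a; move: klt; move: (k : nat) (l : nat) (size q) => x y z; rewrite -!subn1; lia.
rewrite (eq_bigr (fun _ => lead_coef q')); first by rewrite prodr_const card_ord.
move=> k _; rewrite mxE addnK leq_addl mulr1n /lead_coef /a sq //.
Qed.
End ResTop.

Section Kernel.
Variable K : fieldType.

Definition vpoly (m : nat) (f : 'I_m -> K) : {poly K} := \sum_(k < m) f k *: 'X^k.

Lemma vpoly_size m f : (size (@vpoly m f) <= m)%N.
Proof.
apply: (leq_trans (size_sum _ _ _)); apply/bigmax_leqP => k _.
by apply: (leq_trans (size_scale_leq _ _)); rewrite size_polyXn.
Qed.

Lemma vpoly_coef m f (k : 'I_m) : (@vpoly m f)`_k = f k.
Proof.
rewrite /vpoly coef_sum (bigD1 k) //= coefZ coefXn eqxx mulr1 big1 ?addr0 //.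
by move=> i hi; rewrite coefZ coefXn eq_sym val_eqE (negbTE hi) mulr0.
Qed.

Lemma band_coef (m : nat) (f : 'I_m -> K) (a : {poly K}) j :
  (vpoly f * a)`_j = \sum_(k < m) f k * (a`_(j - k) *+ (k <= j)%N).
Proof.
rewrite /vpoly mulr_suml coef_sum; apply: eq_bigr => k _.
rewrite -scalerAl coefZ coefXnM; congr (_ * _).
by case: ltnP => h; rewrite ?mulr0n ?mulr1n.
Qed.

Lemma syl_det_neq0 (m l : nat) (a b : {poly K}) (c : K) :
  c != 0 -> b = c%:P -> size a = l.+1 ->
  \det (\matrix_(i, j) match split i with
            | inl k => a`_(j - k) *+ (k <= j)%N
            | inr k => b`_(j - k) *+ (k <= j)%N end : 'M_(m + l)) != 0.
Proof.
move=> c0 hb ha; apply/det0P => [[v nz hv]].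
pose U := vpoly (fun k : 'I_m => v 0 (lshift l k)).
pose V := vpoly (fun k : 'I_l => v 0 (rshift m k)).
have hUV : U * a + V * b = 0.
  apply/polyP => j; rewrite coef0 coefD !band_coef.
  have [jlt|jge] := ltnP j (m + l).
    have := congr1 (fun M : 'M[K]_(1, m + l) => M 0 (Ordinal jlt)) hv; rewrite !mxE /= big_split_ord /=.
    move=> H; apply: etrans H; congr (_ + _); apply: eq_bigr => k _; rewrite mxE.
      by rewrite (unsplitK (inl _ k)).
    by rewrite (unsplitK (inr _ k)).
  rewrite !big1 ?addr0 // => k _.
    rewrite hb coefC (_ : (j - k == 0)%N = false) ?mul0rn ?mulr0 //.
    by apply/negbTE; move: jge (ltn_ord k); move: (k : nat) => x; lia.
  have /leq_sizeP H : (size a <= j - k)%N.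
    by rewrite ha; move: jge (ltn_ord k); move: (k : nat) => x; lia.
  by rewrite H // mul0rn mulr0.
have U0 : U = 0.
  apply/eqP; apply: contraT => nU.
  have E : U * a = - (V * b) by apply/eqP; rewrite -addr_eq0 hUV.
  have : size (U * a) = size (V * b) by rewrite E size_opp.
  rewrite size_mul // ?ha -?size_poly_eq0 ?ha // hb mulrC mul_polyC size_scale //.
  have := vpoly_size (fun k : 'I_l => v 0 (rshift m k)); rewrite -/V.
  move: nU; rewrite -size_poly_eq0; move: (size U) (size V) => x y; rewrite -!subn1; lia.
have V0 : V = 0.
  by move/eqP: hUV; rewrite U0 mul0r add0r hb mulf_eq0 polyC_eq0 (negbTE c0) orbF => /eqP.
move/eqP: nz; apply; apply/rowP => i; rewrite mxE.
case: (split_ordP i) => k ->.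
  by rewrite -(vpoly_coef (fun k : 'I_m => v 0 (lshift l k))) -/U U0 coef0.
by rewrite -(vpoly_coef (fun k : 'I_l => v 0 (rshift m k))) -/V V0 coef0.
Qed.
End Kernel.

Section Fam.
Variables (C : fieldType) (d n : nat).
Local Notation N := (nparams d n).
Local Notation S := {mpoly C[N]}.
Local Notation T := {poly S}.


Definition fP : {poly S} := \sum_(i < d) ('X_(lam_idx d n i))%:P * 'X^(i.+1).
Definition fQ : {poly S} := 'X^n + \sum_(i < n) ('X_(xi_idx d n i))%:P * 'X^i.
Definition fR : {poly S} := \sum_(i < (n %/ 3).+1) ('X_(zeta_idx d n i))%:P * 'X^i.
Definition fA : {poly S} := fP + fR ^+ 2.
Definition fB : {poly S} := 2%:R *: fQ - fR ^+ 3.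

Lemma famP_E : famP C d n = ('X : T)%:P + fP^:P.
Proof.
rewrite /famP /fP rmorph_sum /=; congr (_ + _); apply: eq_bigr => i _.
by rewrite rmorphM /= map_polyC map_polyXn.
Qed.

Lemma famQ_E : famQ C d n = fQ^:P.
Proof.
rewrite /famQ /fQ rmorphD rmorph_sum /= map_polyXn; congr (_ + _); apply: eq_bigr => i _.
by rewrite rmorphM /= map_polyC map_polyXn.
Qed.

Lemma famR_E : famR C d n = fR^:P.
Proof.
rewrite /famR /fR rmorph_sum /=; apply: eq_bigr => i _.
by rewrite rmorphM /= map_polyC map_polyXn.
Qed.

Lemma cusp_eqE : cusp_eq C d n = resultant (('X : T)%:P + fA^:P) (fB^:P).
Proof.
rewrite /cusp_eq famP_E famQ_E famR_E /fA /fB; congr resultant.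
  by rewrite rmorphD rmorphXn /= addrA.
by rewrite rmorphB rmorphXn /= map_polyZ /= rmorph_nat.
Qed.
End Fam.

Lemma size_lead_eq (R : nzRingType) (p : {poly R}) k :
  (size p <= k.+1)%N -> p`_k != 0 -> size p = k.+1 /\ lead_coef p = p`_k.
Proof.
move=> h1 h2.
have h3 : (k < size p)%N by rewrite ltnNge; apply: contra h2 => /leq_sizeP -> .
have e : size p = k.+1 by apply/eqP; rewrite eqn_leq h1 h3.
by split=> //; rewrite /lead_coef e.
Qed.

Lemma coef_sumCX (R : nzRingType) k (c : 'I_k -> R) (f : 'I_k -> nat) j :
  (\sum_(i < k) (c i)%:P * 'X^(f i))`_j = \sum_(i < k) c i * (j == f i)%:R.
Proof. by rewrite coef_sum; apply: eq_bigr => i _; rewrite coefCM coefXn. Qed.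

Lemma size_sumCX (R : nzRingType) k (c : 'I_k -> R) (f : 'I_k -> nat) b :
  (forall i, f i <= b)%N -> (size (\sum_(i < k) (c i)%:P * 'X^(f i))%R <= b.+1)%N.
Proof.
move=> hf; apply: (leq_trans (size_sum _ _ _)); apply/bigmax_leqP => i _.
rewrite mul_polyC; apply: (leq_trans (size_scale_leq _ _)).
by rewrite size_polyXn ltnS.
Qed.

Lemma meval_neq0 (R : comNzRingType) k (p : {mpoly R[k]}) v : p.@[v] != 0 -> p != 0.
Proof. by apply: contraNneq => ->; rewrite meval0. Qed.

Lemma msize_exp (R : idomainType) k (p : {mpoly R[k]}) e :
  (msize (p ^+ e) <= ((msize p).-1 * e).+1)%N.
Proof.
have [->|p0] := eqVneq p 0.
  by case: e => [|e]; rewrite ?expr0 ?msize1 // expr0n msize0.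
elim: e => [|e IH]; first by rewrite expr0 msize1.
rewrite exprS msizeM ?expf_neq0 //.
rewrite mulnS; move: IH; move: (msize (p ^+ e)) ((msize p).-1 * e)%N => x y.
case: (msize p) => [|s] /=; rewrite -?subn1; lia.
Qed.

Section FamB.
Variables (C : fieldType) (charC0 : [pchar C] =i pred0) (d n : nat) (n0 : (0 < n)%N).
Local Notation N := (nparams d n).
Local Notation S := {mpoly C[N]}.

Definition zm : 'I_N := zeta_idx d n ord_max.
Definition Lc : S := if (3 %| n)%N then 2%:R - 'X_zm ^+ 3 else 2%:R.

Lemma natS_neq0 k : (k.+1%:R : S) != 0.
Proof.
rewrite -mpolyC_nat mpolyC_eq0; by move/pcharf0P: charC0 => ->.
Qed.

Lemma Lc_neq0 : Lc != 0.
Proof.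
apply: (@meval_neq0 _ _ _ (fun _ => 0)); rewrite /Lc; case: ifP => _.
  rewrite rmorphB rmorphXn /= mevalXU rmorph_nat expr0n /= subr0.
  by move/pcharf0P: charC0 => ->.
by rewrite rmorph_nat; move/pcharf0P: charC0 => ->.
Qed.

Lemma Xz_neq0 (i : 'I_N) : ('X_i : S) != 0.
Proof. by apply: (@meval_neq0 _ _ _ (fun _ => 1)); rewrite mevalXU oner_eq0. Qed.

Lemma fQ_size : (size (fQ C d n) <= n.+1)%N.
Proof.
apply: (leq_trans (size_polyD _ _)); rewrite geq_max size_polyXn leqnn /=.
by apply: size_sumCX => i; apply: ltnW.
Qed.

Lemma fQ_coef : (fQ C d n)`_n = 1.
Proof.
rewrite /fQ coefD coefXn eqxx coef_sumCX big1 ?addr0 // => i _.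
by rewrite gtn_eqF ?mulr0.
Qed.

Lemma fR_size : (size (fR C d n) <= (n %/ 3).+1)%N.
Proof. by apply: size_sumCX => i; rewrite -ltnS. Qed.

Lemma fR_coef : (fR C d n)`_(n %/ 3) = 'X_zm.
Proof.
rewrite /fR coef_sumCX (bigD1 ord_max) //= eqxx mulr1 big1 ?addr0 // => i hi.
rewrite (_ : (n %/ 3 == i)%N = false) ?mulr0 //.
apply/negbTE; move: hi; apply: contra => /eqP h; apply/eqP/val_inj => /=. by rewrite -h.
Qed.

Lemma fR3_size : (size (fR C d n ^+ 3) <= (3 * (n %/ 3)).+1)%N.
Proof.
have := size_exp (fR C d n) 3; have := fR_size.
move: (size (fR C d n ^+ 3)) (size (fR C d n)) => x y; rewrite -!subn1; lia.
Qed.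

Lemma fR3_coef : (fR C d n ^+ 3)`_n = if (3 %| n)%N then 'X_zm ^+ 3 else 0.
Proof.
case: ifP => h.
  have hX : (fR C d n)`_(n %/ 3) != 0 by rewrite fR_coef Xz_neq0.
  have [s1 l1] := size_lead_eq fR_size hX.
  have e : n = (3 * (n %/ 3))%N by rewrite mulnC divnK.
  have hs : size (fR C d n ^+ 3) = (3 * (n %/ 3)).+1.
    have := size_exp (fR C d n) 3; rewrite s1 /= mulnC.
    have : fR C d n ^+ 3 != 0 by rewrite expf_neq0 // -size_poly_eq0 s1.
    by rewrite -size_poly_eq0; case: (size (fR C d n ^+ 3)) => //= x _ ->.
  have L3 : lead_coef (fR C d n ^+ 3) = 'X_zm ^+ 3 by rewrite lead_coef_exp l1 fR_coef.
  by rewrite /lead_coef hs /= -e in L3.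
apply: (leq_sizeP _ _ fR3_size); have := leq_trunc_div n 3.
have : (n %/ 3 * 3 != n)%N by apply: contraFneq h => <-; rewrite dvdn_mull.
lia.
Qed.

Lemma fB_coef : (fB C d n)`_n = Lc.
Proof.
rewrite /fB coefB coefZ fQ_coef mulr1 fR3_coef /Lc; by case: ifP; rewrite ?subr0.
Qed.

Lemma fB_size_lead : size (fB C d n) = n.+1 /\ lead_coef (fB C d n) = Lc.
Proof.
rewrite -fB_coef; apply: size_lead_eq; last by rewrite fB_coef Lc_neq0.
apply: (leq_trans (size_polyD _ _)); rewrite geq_max size_opp.
rewrite (leq_trans (size_scale_leq _ _) fQ_size) /=.
apply: (leq_trans fR3_size); have := leq_trunc_div n 3; lia.
Qed.
End FamB.

Lemma cusp_size (C : fieldType) (charC0 : [pchar C] =i pred0) d n (n0 : (0 < n)%N) :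
  size (cusp_eq C d n) = n.+1 /\
  (cusp_eq C d n)`_n = Lc C d n ^+ (size (('X : {poly {mpoly C[nparams d n]}})%:P + (fA C d n)^:P)).-1.
Proof.
have [sB lB] := fB_size_lead charC0 d n0.
have [h1 h2] := res_top (fA C d n) (fB C d n).
rewrite sB /= lB in h1 h2; rewrite cusp_eqE.
have nz : (resultant (('X : {poly {mpoly C[nparams d n]}})%:P + (fA C d n)^:P) (fB C d n)^:P)`_n != 0.
  by rewrite h2 expf_neq0 // Lc_neq0.
by have [-> _] := size_lead_eq h1 nz.
Qed.

Section Cop.
Variables (C : closedFieldType) (charC0 : [pchar C] =i pred0) (d n : nat) (n0 : (0 < n)%N).
Local Notation N := (nparams d n).
Local Notation S := {mpoly C[N]}.
Local Notation m := (n %/ 3)%N.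

Definition val3 (R : Type) (fl : 'I_d -> R) (fx : 'I_n -> R) (fz : 'I_(n %/ 3).+1 -> R)
  (i : 'I_N) : R :=
  match split (i : 'I_(d + (n + (n %/ 3).+1))) with
  | inl j => fl j
  | inr k => match split k with inl j => fx j | inr j => fz j end end.

Lemma val3_lam R fl fx fz j : @val3 R fl fx fz (lam_idx d n j) = fl j.
Proof. by rewrite /val3 /lam_idx (unsplitK (inl _ j)). Qed.
Lemma val3_xi R fl fx fz j : @val3 R fl fx fz (xi_idx d n j) = fx j.
Proof.
rewrite /val3 /xi_idx (unsplitK (inr _ (lshift _ j))).
by rewrite (unsplitK (inl _ j)).
Qed.
Lemma val3_zeta R fl fx fz j : @val3 R fl fx fz (zeta_idx d n j) = fz j.
Proof.
rewrite /val3 /zeta_idx (unsplitK (inr _ (rshift _ j))).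
by rewrite (unsplitK (inr _ j)).
Qed.

Definition hv : 'I_N -> {poly C} :=
  val3 (fun j => ((j.+1 == d)%N)%:R) (fun j => ((j : nat) == 0%N)%:R)
       (fun j => if j == ord_max then 'X else 0).
Definition vv (rho : C) : 'I_N -> C :=
  val3 (fun j => ((j.+1 == d)%N)%:R) (fun j => ((j : nat) == 0%N)%:R)
       (fun j => if j == ord_max then rho else 0).

Definition tau (p : S) : {poly C} := mmap (@polyC C) hv p.

Lemma tau_M p q : tau (p * q) = tau p * tau q.
Proof. by rewrite /tau rmorphM. Qed.

Lemma hv_size i : (size (hv i) <= 2)%N.
Proof.
rewrite /hv /val3; case: split => [j|k]; last case: split => [j|j].
- by case: (_ == _) => /=; rewrite ?mulr1n ?mulr0n ?size_poly1 ?size_poly0.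
- by case: (_ == _) => /=; rewrite ?mulr1n ?mulr0n ?size_poly1 ?size_poly0.
- by case: ifP; rewrite ?size_polyX ?size_poly0.
Qed.

Lemma hv_horner rho i : (hv i).[rho] = vv rho i.
Proof.
rewrite /hv /vv /val3; case: split => [j|k]; last case: split => [j|j].
- by case: (_ == _) => /=; rewrite ?mulr1n ?mulr0n ?hornerC ?horner0 ?hornerE.
- by case: (_ == _) => /=; rewrite ?mulr1n ?mulr0n ?hornerC ?horner0 ?hornerE.
- by case: ifP; rewrite ?hornerX ?horner0.
Qed.

Lemma tau_X i : tau 'X_i = hv i.
Proof. by rewrite /tau mmapX mmap1U. Qed.

Lemma tau_C c : tau c%:MP = c%:P.
Proof. by rewrite /tau mmapC. Qed.

Lemma tau_size p : (size (tau p) <= msize p)%N.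
Proof.
rewrite /tau (mmapE (msize p)) //.
apply: (leq_trans (size_sum _ _ _)); apply/bigmax_leqP => mm _.
rewrite mul_polyC; apply: (leq_trans (size_scale_leq _ _)).
have hF : forall i, (size (hv i ^+ (val mm) i) <= ((val mm) i).+1)%N.
  move=> i; move: ((val mm) i) => z; have := size_exp (hv i) z; have := hv_size i.
  move: (size (hv i ^+ z)) (size (hv i)) => x y.
  case: y => [|[|[|y]]] //= _; rewrite ?mul0n ?mul1n; case: x => //= x; lia.
have [h _] := prod_top (index_enum 'I_N) hF.
apply: (leq_trans h); have := bmdeg mm; rewrite mdegE; exact.
Qed.

Lemma tau_horner p rho : (tau p).[rho] = p.@[vv rho].
Proof.
rewrite /tau /mmap mevalE horner_sum; apply: eq_bigr => mm _.
rewrite hornerM hornerC /mmap1 horner_prod; congr (_ * _); apply: eq_bigr => i _.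
by rewrite hornerE hv_horner.
Qed.

Local Notation A := (('X : {poly S})%:P + (fA C d n)^:P).
Local Notation B := ((fB C d n)^:P).

Lemma c0_eval (v : 'I_N -> C) :
  ((resultant A B)`_0).@[v] =
  \det (\matrix_(i, j) match split i with
            | inl k => (map_poly (meval v) (fA C d n))`_(j - k) *+ (k <= j)%N
            | inr k => (map_poly (meval v) (fB C d n))`_(j - k) *+ (k <= j)%N end
        : 'M_((size B).-1 + (size A).-1)).
Proof.
rewrite -horner_coef0 -horner_evalE /resultant -det_map_mx -det_map_mx.
have E := @Sylvester_mxE _ A B.
move: (Sylvester_mx A B) E => M E.
congr (\det _); apply/matrixP => i j; rewrite !mxE E /=.
case: split => k; rewrite /= horner_evalE; case: (k <= j)%N; rewrite ?mulr0n ?mulr1n ?horner0 ?meval0 //.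
  rewrite coefD coefC coef_map /= hornerD hornerC coef_map /=.
  by case: (_ == _); rewrite ?horner0 ?hornerX ?add0r.
by rewrite coef_map /= hornerC coef_map.
Qed.

Lemma map_sumCX (v : 'I_N -> C) k (c : 'I_k -> S) (f : 'I_k -> nat) :
  map_poly (meval v) (\sum_(i < k) (c i)%:P * 'X^(f i)) =
  \sum_(i < k) ((c i).@[v])%:P * 'X^(f i).
Proof.
rewrite rmorph_sum /=; apply: eq_bigr => i _.
by rewrite rmorphM /= map_polyC map_polyXn.
Qed.

Lemma size_map_leq (R1 R2 : nzRingType) (f : R1 -> R2) (p : {poly R1}) :
  (size (map_poly f p) <= size p)%N.
Proof. by rewrite /map_poly; exact: size_poly. Qed.

Variable rho : C.
Local Notation v := (vv rho).

Lemma mfR : map_poly (meval v) (fR C d n) = rho%:P * 'X^m.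
Proof.
rewrite /fR map_sumCX (bigD1 ord_max) //= big1 ?addr0.
  by rewrite mevalXU /vv val3_zeta eqxx.
move=> i hi; rewrite mevalXU /vv val3_zeta (negbTE hi) mul0r //.
Qed.

Lemma mfQ : map_poly (meval v) (fQ C d n) = 'X^n + 1.
Proof.
rewrite /fQ rmorphD /= map_polyXn map_sumCX (bigD1 (Ordinal n0)) //= big1 ?addr0.
  by rewrite mevalXU /vv val3_xi /= mul1r expr0.
move=> i hi; rewrite mevalXU /vv val3_xi /= (_ : ((i : nat) == 0%N) = false) ?mul0r //.
apply/negbTE; move: hi; apply: contra => /eqP h; apply/eqP/val_inj; exact: h.
Qed.

Lemma mfP_coef j : (map_poly (meval v) (fP C d n))`_j = ((j == d) && (0 < d)%N)%:R.
Proof.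
rewrite /fP map_sumCX coef_sumCX.
have [d0|dpos] := posnP d.
  rewrite big1 ?andbF // => i; have := ltn_ord i; rewrite {2}d0.
  by [].
rewrite (bigD1 (Ordinal (ltac:(by rewrite ltn_predL) : (d.-1 < d)%N))) //= big1 ?addr0.
  by rewrite mevalXU /vv val3_lam /= prednK // eqxx mul1r andbT.
move=> i hi; rewrite mevalXU /vv val3_lam (_ : (i.+1 == d)%N = false) ?mul0r //.
apply/negbTE; move: hi; apply: contra => /eqP h; apply/eqP/val_inj => /=.
by move: h; move: (i : nat) => x; rewrite -subn1; lia.
Qed.

Hypothesis h3 : (3 %| n)%N.
Hypothesis hr : rho ^+ 3 = 2%:R.

Lemma n3 : n = (m * 3)%N.
Proof. by rewrite divnK. Qed.

Lemma m_pos : (0 < m)%N.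
Proof. have := n3; have := n0; lia. Qed.

Lemma two_neq0 : (2%:R : C) != 0.
Proof. by move/pcharf0P: charC0 => ->. Qed.

Lemma rho_neq0 : rho != 0.
Proof. by apply: contra_eq_neq hr => ->; rewrite expr0n /= eq_sym two_neq0. Qed.

Lemma onerho2 : 1 + rho ^+ 2 != 0.
Proof.
apply/eqP => h.
have h2 : rho ^+ 2 = -1 by apply/eqP; rewrite -addr_eq0 addrC h.
have hr' : rho = - 2%:R.
  by rewrite -hr exprS h2 mulrN1 opprK.
move: h2; rewrite hr' sqrrN => /eqP; rewrite -subr_eq0 opprK.
have -> : (2%:R : C) ^+ 2 + 1 = 5%:R by ring.
by move/pcharf0P: charC0 => ->.
Qed.

Lemma mfB : map_poly (meval v) (fB C d n) = 2%:R%:P.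
Proof.
rewrite /fB rmorphB rmorphXn /= map_polyZ /= mfQ mfR rmorph_nat.
rewrite exprMn -rmorphXn /= hr -exprM -n3 -mul_polyC; ring.
Qed.

Lemma mfA_coef j : (map_poly (meval v) (fA C d n))`_j =
  ((j == d) && (0 < d)%N)%:R + rho ^+ 2 * (j == (m * 2))%:R.
Proof.
rewrite /fA rmorphD rmorphXn /= mfR coefD mfP_coef exprMn -rmorphXn -exprM /=.
by rewrite coefCM coefXn.
Qed.

Local Notation D := (maxn d (m * 2)).

Lemma fA_size_le : (size (fA C d n) <= D.+1)%N.
Proof.
apply: (leq_trans (size_polyD _ _)); rewrite geq_max; apply/andP; split.
  have := @size_sumCX S d (fun i => 'X_(lam_idx d n i)) (fun i => i.+1) d (fun i => ltn_ord i).
  by rewrite /fP => /leq_trans; apply; rewrite ltnS leq_maxl.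
have := size_exp (fR C d n) 2; have := fR_size C d n.
have := leq_maxr d (m * 2).
move: (size (fR C d n ^+ 2)) (size (fR C d n)) => x y; rewrite -!subn1; lia.
Qed.

Lemma mfA_size : size (map_poly (meval v) (fA C d n)) = D.+1.
Proof.
have hle : (size (map_poly (meval v) (fA C d n)) <= D.+1)%N.
  exact: leq_trans (size_map_leq _ _) fA_size_le.
have hD : (map_poly (meval v) (fA C d n))`_D != 0.
  rewrite mfA_coef.
  have [hlt|hgt|heq] := ltngtP d (m * 2).
  - by rewrite (gtn_eqF hlt) eqxx /= add0r mulr1 expf_neq0 // rho_neq0.
  - rewrite eqxx (gtn_eqF hgt) /= mulr0 addr0.
    by rewrite (_ : (0 < d)%N = true) ?oner_eq0 //; move: hgt; lia.
  - rewrite ?heq ?maxnn !eqxx /= mulr1.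
    rewrite (_ : (0 < m * 2)%N = true) ?onerho2 //; have := m_pos; lia.
by have [-> _] := size_lead_eq hle hD.
Qed.

Lemma fA_size : size (fA C d n) = D.+1.
Proof.
apply/eqP; rewrite eqn_leq fA_size_le /= -mfA_size; exact: size_map_leq.
Qed.

Lemma A_size : size A = D.+1.
Proof.
rewrite addrC size_polyDl size_map_polyC ?fA_size // size_polyC.
have := m_pos; have := leq_maxr d (m * 2); case: (_ != _); lia.
Qed.

Lemma c0_neq0 : ((resultant A B)`_0).@[v] != 0.
Proof.
rewrite c0_eval.
apply: (@syl_det_neq0 _ (size B).-1 _ _ _ _ two_neq0 mfB).
by rewrite mfA_size A_size.
Qed.
End Cop.

Section Main.
Variables (C : closedFieldType) (charC0 : [pchar C] =i pred0) (d n : nat) (n0 : (0 < n)%N).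
Local Notation N := (nparams d n).
Local Notation S := {mpoly C[N]}.

Lemma tau_B (p q : S) : tau (p - q) = tau p - tau q. Proof. by rewrite /tau rmorphB. Qed.
Lemma tau_Xn (p : S) k : tau (p ^+ k) = tau p ^+ k. Proof. by rewrite /tau rmorphXn. Qed.
Lemma tau_nat k : tau (k%:R : S) = k%:R. Proof. by rewrite /tau rmorph_nat. Qed.

Lemma Lc_eval rho : (Lc C d n).@[vv rho] = if (3 %| n)%N then 2%:R - rho ^+ 3 else 2%:R.
Proof.
rewrite /Lc; case: ifP => _; last by rewrite rmorph_nat.
by rewrite rmorphB rmorphXn /= rmorph_nat mevalXU /vv /zm val3_zeta eqxx.
Qed.

Lemma two_neq0C : (2%:R : C) != 0.
Proof. by move/pcharf0P: charC0 => ->. Qed.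

Lemma tauLk_neq0 k : tau (Lc C d n ^+ k) != 0.
Proof.
apply/eqP => h; have := congr1 (horner^~ 0) h; rewrite tau_horner horner0 rmorphXn /=.
rewrite Lc_eval expr0n /=; case: ifP => _; rewrite ?subr0 => /eqP; rewrite expf_eq0 (negbTE two_neq0C) andbF //.
Qed.

Lemma msize_tau_Lk k : (msize (Lc C d n ^+ k) <= size (tau (Lc C d n ^+ k)))%N.
Proof.
have nz := tauLk_neq0 k.
case: (boolP (3 %| n)%N) => h3.
  have tL : tau (Lc C d n) = 2%:R - 'X ^+ 3.
    by rewrite /Lc h3 /= tau_B tau_Xn tau_nat tau_X /hv /zm val3_zeta eqxx.
  have sL : size (tau (Lc C d n)) = 4%N.
    rewrite tL addrC size_polyDl size_opp size_polyXn // -polyC_natr size_polyC.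
    by case: (_ != _).
  have mL : (msize (Lc C d n) <= 4)%N.
    rewrite /Lc h3 /=; apply: (leq_trans (msizeD_le _ _)); rewrite geq_max msizeN.
    rewrite -mpolyC_nat msizeC; apply/andP; split; first by case: (_ != _).
    apply: (leq_trans (msize_exp _ _)); rewrite msizeX mdeg1 //.
  have := size_exp (tau (Lc C d n)) k; rewrite sL -tau_Xn.
  have := msize_exp (Lc C d n) k; move: nz; rewrite -size_poly_eq0.
  have : ((msize (Lc C d n)).-1 * k <= 3 * k)%N by rewrite leq_mul2r; move: mL; case: (msize _) => [|[|[|[|[|]]]]]; rewrite ?orbT.
  move: (size (tau (Lc C d n ^+ k))) (msize (Lc C d n ^+ k)) ((msize (Lc C d n)).-1 * k)%N => x y z.
  rewrite -!subn1; lia.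
have -> : Lc C d n = (2%:R : C)%:MP by rewrite /Lc (negbTE h3) mpolyC_nat.
apply: (leq_trans (msize_exp _ _)).
rewrite msizeC two_neq0C /= mul0n.
by move: nz; rewrite -size_poly_eq0 /Lc (negbTE h3) -mpolyC_nat; case: (size _).
Qed.

Lemma coprime_part : coprime_family (fun i => (cusp_eq C d n)`_i).
Proof.
move=> g hg.
have [_ hcn] := cusp_size charC0 d n0.
move: hcn; set k := (size _).-1 => hcn.
have [hN eN] := hg n; rewrite hcn in eN.
have [h0 e0] := hg 0%N.
have LK0 : Lc C d n ^+ k != 0 by rewrite expf_neq0 // Lc_neq0.
have g0 : g != 0 by apply: contraNneq LK0 => g0; rewrite eN g0 mul0r.
have hN0 : hN != 0 by apply: contraNneq LK0 => h; rewrite eN h mulr0.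
have tLk := tauLk_neq0 k.
have tg0 : tau g != 0 by apply: contraNneq tLk => h; rewrite eN tau_M h mul0r.
have thN0 : tau hN != 0 by apply: contraNneq tLk => h; rewrite eN tau_M h mulr0.
have tg : size (tau g) = msize g.
  have e1 := size_mul tg0 thN0; rewrite -tau_M -eN in e1.
  have e2 := msizeM g0 hN0; rewrite -eN in e2.
  have le1 := tau_size n0 g; have le2 := tau_size n0 hN.
  have le3 := msize_tau_Lk k.
  have p1 : (0 < size (tau g))%N by rewrite size_poly_gt0.
  move: e1 e2 le1 le2 le3 p1.
  move: (size (tau g)) (size (tau hN)) (msize g) (msize hN) (size (tau (Lc C d n ^+ k))) (msize (Lc C d n ^+ k)).
  move=> a b c e f h; rewrite -!subn1; lia.
suff hs : (msize g <= 1)%N.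
  exists g@_0%MM; last exact: msize1_polyC.
  by apply: contra_neq g0 => h; rewrite (msize1_polyC hs) h mpolyC0.
rewrite -tg; case: (boolP (size (tau g) == 1%N)) => [/eqP -> //|hne].
case/closed_rootP: hne => rho /eqP hrho.
have hL : (Lc C d n ^+ k).@[vv rho] = 0.
  by rewrite -tau_horner eN tau_M hornerM hrho mul0r.
have h3 : (3 %| n)%N /\ rho ^+ 3 = 2%:R.
  move: hL; rewrite rmorphXn /= Lc_eval => /eqP; rewrite expf_eq0 => /andP [_].
  case: ifP => h3; last by rewrite (negbTE two_neq0C).
  by rewrite subr_eq0 => /eqP <-.
case: h3 => h3 hr.
have := c0_neq0 charC0 d n0 h3 hr; rewrite -cusp_eqE -tau_horner e0 tau_M hornerM hrho mul0r.
by rewrite eqxx.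
Qed.
End Main.

End Aux.

Theorem mainTheorem10 (C : closedFieldType) (charC0 : [pchar C] =i pred0) :
  (forall p q r : {poly C},
     (p + r ^+ 2 != 0) || (2%:R *: q - r ^+ 3 != 0) ->
     (cuspidal p q r <-> resultant (p + r ^+ 2) (2%:R *: q - r ^+ 3) = 0))
  /\
  (forall d n : nat, (0 < n)%N ->
     size (cusp_eq C d n) = n.+1 /\
     coprime_family (fun i => (cusp_eq C d n)`_i)).
Proof.
split; first exact: Aux.part1.
move=> d n n0; split.
  by have [-> _] := Aux.cusp_size charC0 d n0.
exact: Aux.coprime_part.
Qed.
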